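(* (Global context translation.) Let $\Delta$ be the global context collected from a FOOD program $P$, and $\Delta'$ the global context collected from $P'$, where $\Delta;\Gamma\vdash P\Rightarrow T\leadsto P'$. Then $\textsc{It}=\textsc{Dt}'$ and $\textsc{Dt}=\textsc{It}'$; for all $D\in\textsc{It}$, $\textsc{Dtr}(D)=\textsc{Csm}'(D)$ and $\textsc{Gen}(D)=\textsc{Ctr}'(D)$; and for all $D\in\textsc{Dt}$, $\textsc{Csm}(D)=\textsc{Dtr}'(D)$ and $\textsc{Ctr}(D)=\textsc{Gen}'(D)$. (This situation is written $\Delta\leadsto\Delta'$.)
   Context: FOOD programs consist of definitions followed by an expression. Definitions: datatypes $\texttt{data}\ D$; interfaces $\texttt{interface}\ D\{\overline{Dtr}\}$ with destructors (declarations $\texttt{def}\ f(\overline{x:T}):T$ or functions with a default body); constructors $\texttt{case}\ C(\overline{x:T})\ \texttt{extends}\ D$; generators $\texttt{class}\ C(\overline{x:T})\ \texttt{implements}\ D\{\overline{Fun}\}$; consumers $\texttt{def}\ f(\texttt{self}:D)(\overline{x:T}):T=\overline{\texttt{case}\ P\Rightarrow e}$. Global context (primes denote the context of $P'$): $\textsc{Dt}$ datatype names, $\textsc{It}$ interface names (only types selected for transformation are kept in these sets; unselected types have their associated sets emptied), $\textsc{Ctr}(D)$, $\textsc{Gen}(D)$, $\textsc{Dtr}(D)$, $\textsc{Csm}(D)$ the constructors, generators, destructors and consumers (first parameter of type $D$) of $D$. The translation $\Delta;\Gamma\vdash P\Rightarrow T\leadsto P'$: (It2Dt) each $\texttt{interface}\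 D\{\overline{Dtr}\}$ with $D\in\textsc{It}$ becomes $\texttt{data}\ D$ followed by one consumer $\texttt{def}\ f(\texttt{self}:D)(\overline{x:T}):T$ per destructor $f$, whose clauses are $\texttt{case}\ C(\overline y)\Rightarrow[\texttt{this}\mapsto\texttt{self}]e'$ for each generator $C(\overline{y:S})$ of $D$ implementing $f$ with translated body $e'$, plus $\texttt{case}\ \_\Rightarrow[\texttt{this}\mapsto\texttt{self}]e'$ for a translated default body $e'$; (Gen2Ctr) generators of $D\in\textsc{It}$ become constructors $\texttt{case}\ C(\overline{x:T})\ \texttt{extends}\ D$; (Dt2It) each $\texttt{data}\ D$ with $D\in\textsc{Dt}$ becomes $\texttt{interface}\ D$ with destructor $\texttt{def}\ f(\overline{x:T}):T$ for each consumer $f$ of $D$ (with default body $[\texttt{self}\mapsto\texttt{this}]e'$ if $f$ has a wildcard clause whose body translates to $e'$); (Ctr2Gen) constructors $C(\overline{x:T})$ of $D\in\textsc{Dt}$ become $\texttt{class}\ C(\overline{x:T})\ \texttt{implements}\ D$ with functions $\texttt{def}\ f(\overline{x:T}):T=[\texttt{self}\mapsto\texttt{this}]e'$ from the clauses $\texttt{case}\ C(\overline y)\Rightarrow e$ of the consumers; (CsmElim) consumers on transformed datatypes are removed; definitions of non-transformed types are kept, with only inner expressions translated. *)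

(* Defs.v *)
From Stdlib Require Import String List Bool.
Import ListNotations.


Definition name := string.

Inductive ty : Type := TName (D : name).

(* Expressions: variables, [this], constructor/generator calls C(es),
   destructor/consumer calls e.f(es). *)
Inductive expr : Type :=
| EVar (x : name)
| EThis
| ECall (C : name) (args : list expr)
| EInv (recv : expr) (f : name) (args : list expr).

(* The distinguished variable [self] (first parameter of consumers). *)
Definition self_var : name := "self"%string.

Fixpoint esub (fv : name -> expr) (fthis : expr) (e : expr) : expr :=
  match e with
  | EVar x => fv x
  | EThis => fthis
  | ECall C args => ECall C (map (esub fv fthis) args)
  | EInv r f args => EInv (esub fv fthis r) f (map (esub fv fthis) args)
  end.

Definition this_to_self (e : expr) : expr := esub EVar (EVar self_var) e.
Definition self_to_this (e : expr) : expr :=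
  esub (fun x => if String.eqb x self_var then EThis else EVar x) EThis e.

Definition params := list (name * ty).

Inductive dtr : Type :=
| DtrDecl (f : name) (ps : params) (ret : ty)
| DtrDef (f : name) (ps : params) (ret : ty) (body : expr).

Record fn : Type := Fn { fn_name : name; fn_params : params; fn_ret : ty; fn_body : expr }.

Inductive pat : Type := PCtr (C : name) (ys : list name) | PWild.
Definition clause := (pat * expr)%type.

Inductive defn : Type :=
| DData (D : name)
| DIface (D : name) (ds : list dtr)
| DCtr (C : name) (ps : params) (D : name)
| DGen (C : name) (ps : params) (D : name) (fs : list fn)
| DCsm (f : name) (D : name) (ps : params) (ret : ty) (cls : list clause).
                                                     (* def f(self:D)(xs:Ts):T = clauses *)

Record program : Type := Prog { prog_defs : list defn; prog_main : expr }.

Definition csig := (name * params)%type.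
Definition fsig := (name * params * ty)%type.

Record gctx : Type := GCtx {
  Dt : list name;
  It : list name;
  Ctr : name -> list csig;
  Gen : name -> list csig;
  Dtr : name -> list fsig;
  Csm : name -> list fsig }.

Definition dtr_sig (d : dtr) : fsig :=
  match d with DtrDecl f ps r => (f, ps, r) | DtrDef f ps r _ => (f, ps, r) end.

(* Global context collected from a list of definitions, given the selection
   [sel] of types to transform: only selected types are kept in Dt / It, and
   the sets associated to unselected types are empty. *)
Definition collect (sel : name -> bool) (ds : list defn) : gctx :=
  GCtx
    (flat_map (fun d => match d with DData D => if sel D then [D] else [] | _ => [] end) ds)
    (flat_map (fun d => match d with DIface D _ => if sel D then [D] else [] | _ => [] end) ds)
    (fun D => if sel D then flat_map (fun d => match d with
        | DCtr C ps D' => if String.eqb D D' then [(C, ps)] else [] | _ => [] end) ds else [])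
    (fun D => if sel D then flat_map (fun d => match d with
        | DGen C ps D' _ => if String.eqb D D' then [(C, ps)] else [] | _ => [] end) ds else [])
    (fun D => if sel D then flat_map (fun d => match d with
        | DIface D' dts => if String.eqb D D' then map dtr_sig dts else [] | _ => [] end) ds else [])
    (fun D => if sel D then flat_map (fun d => match d with
        | DCsm f D' ps r _ => if String.eqb D D' then [(f, ps, r)] else [] | _ => [] end) ds else []).

Record lctx : Type := LCtx { lthis : option ty; lvars : params }.

Definition etrans := gctx -> lctx -> expr -> ty -> expr -> Prop.

Section Trans.
Variable etr : etrans.
Variable Delta : gctx.
Variable ds : list defn.

Definition gens_impl (D f : name) : list (name * params * fn) :=
  flat_map (fun d => match d with
    | DGen C ys D' fs =>
        if String.eqb D D' then
          match find (fun g => String.eqb (fn_name g) f) fs with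
          | Some g => [(C, ys, g)] | None => [] end
        else []
    | _ => [] end) ds.

Definition csms_of (D : name) : list (name * params * ty * list clause) :=
  flat_map (fun d => match d with
    | DCsm f D' ps r cls => if String.eqb D D' then [(f, ps, r, cls)] else []
    | _ => [] end) ds.

Definition is_wild (c : clause) : bool := match fst c with PWild => true | _ => false end.
Definition is_ctr (C : name) (c : clause) : bool :=
  match fst c with PCtr C' _ => String.eqb C C' | _ => false end.

Definition csms_with_clause (D C : name) : list (name * params * ty * list name * expr) :=
  flat_map (fun d => match d with
    | DCsm f D' ps r cls =>
        if String.eqb D D' then
          match find (is_ctr C) cls with
          | Some (PCtr _ ys, e) => [(f, ps, r, ys, e)]
          | _ => [] end
        else []
    | _ => [] end) ds.

Definition ctor_fields (C : name) : params :=
  match find (fun d => match d with DCtr C' _ _ => String.eqb C C' | _ => false end) ds with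
  | Some (DCtr _ ps _) => ps | _ => [] end.

Definition pat_vars (p : pat) : params :=
  match p with PCtr C ys => combine ys (map snd (ctor_fields C)) | PWild => [] end.

Definition dtr_to_csm (D : name) (dt : dtr) (c : defn) : Prop :=
  let '(f, ps, r) := dtr_sig dt in
  exists (gcls dcl : list clause),
    Forall2 (fun (cyg : name * params * fn) (cl : clause) =>
               let '(C, ys, g) := cyg in
               exists e', etr Delta (LCtx (Some (TName D)) (ys ++ fn_params g)) (fn_body g) r e'
                          /\ cl = (PCtr C (map fst ys), this_to_self e'))
            (gens_impl D f) gcls
    /\ (match dt with
        | DtrDecl _ _ _ => dcl = []
        | DtrDef _ _ _ body =>
            exists e', etr Delta (LCtx (Some (TName D)) ps) body r e'
                       /\ dcl = [(PWild, this_to_self e')]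
        end)
    /\ c = DCsm f D ps r (gcls ++ dcl).

Definition csm_to_dtr (D : name) (cs : name * params * ty * list clause) (dt : dtr) : Prop :=
  let '(f, ps, r, cls) := cs in
  match find is_wild cls with
  | None => dt = DtrDecl f ps r
  | Some (_, e) =>
      exists e', etr Delta (LCtx None ((self_var, TName D) :: ps)) e r e'
                 /\ dt = DtrDef f ps r (self_to_this e')
  end.

Definition csm_to_fn (D : name) (xs : params)
    (cs : name * params * ty * list name * expr) (g : fn) : Prop :=
  let '(f, ps, r, ys, e) := cs in
  exists e', etr Delta (LCtx None ((self_var, TName D) :: combine ys (map snd xs) ++ ps)) e r e'
             /\ g = Fn f ps r (self_to_this e').

Definition keep_dtr (D : name) (dt dt' : dtr) : Prop :=
  match dt with
  | DtrDecl f ps r => dt' = DtrDecl f ps r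
  | DtrDef f ps r e =>
      exists e', etr Delta (LCtx (Some (TName D)) ps) e r e' /\ dt' = DtrDef f ps r e'
  end.

Definition keep_fn (D : name) (xs : params) (g g' : fn) : Prop :=
  exists e', etr Delta (LCtx (Some (TName D)) (xs ++ fn_params g)) (fn_body g) (fn_ret g) e'
             /\ g' = Fn (fn_name g) (fn_params g) (fn_ret g) e'.

Definition keep_clause (D : name) (ps : params) (r : ty) (c c' : clause) : Prop :=
  exists e', etr Delta (LCtx None ((self_var, TName D) :: pat_vars (fst c) ++ ps)) (snd c) r e'
             /\ c' = (fst c, e').

Definition transformed (D : name) : Prop := In D (Dt Delta) \/ In D (It Delta).

Inductive trans_def : defn -> list defn -> Prop :=
| T_It2Dt D dts csms :
    In D (It Delta) -> Forall2 (dtr_to_csm D) dts csms ->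
    trans_def (DIface D dts) (DData D :: csms)
| T_Gen2Ctr C ps D fs :
    In D (It Delta) -> trans_def (DGen C ps D fs) [DCtr C ps D]
| T_Dt2It D dts :
    In D (Dt Delta) -> Forall2 (csm_to_dtr D) (csms_of D) dts ->
    trans_def (DData D) [DIface D dts]
| T_Ctr2Gen C ps D fs :
    In D (Dt Delta) -> Forall2 (csm_to_fn D ps) (csms_with_clause D C) fs ->
    trans_def (DCtr C ps D) [DGen C ps D fs]
| T_CsmElim f D ps r cls :
    In D (Dt Delta) -> trans_def (DCsm f D ps r cls) []
| T_KeepData D :
    ~ transformed D -> trans_def (DData D) [DData D]
| T_KeepIface D dts dts' :
    ~ transformed D -> Forall2 (keep_dtr D) dts dts' ->
    trans_def (DIface D dts) [DIface D dts']
| T_KeepCtr C ps D :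
    ~ transformed D -> trans_def (DCtr C ps D) [DCtr C ps D]
| T_KeepGen C ps D fs fs' :
    ~ transformed D -> Forall2 (keep_fn D ps) fs fs' ->
    trans_def (DGen C ps D fs) [DGen C ps D fs']
| T_KeepCsm f D ps r cls cls' :
    ~ transformed D -> Forall2 (keep_clause D ps r) cls cls' ->
    trans_def (DCsm f D ps r cls) [DCsm f D ps r cls'].

End Trans.

Definition trans_prog (etr : etrans) (Delta : gctx) (Gamma : lctx)
    (P : program) (T : ty) (P' : program) : Prop :=
  exists outs,
    Forall2 (trans_def etr Delta (prog_defs P)) (prog_defs P) outs
    /\ prog_defs P' = concat outs
    /\ etr Delta Gamma (prog_main P) T (prog_main P').

(* equality of the finite sets represented by two lists *)
Definition seteq {A : Type} (l1 l2 : list A) : Prop := forall x, In x l1 <-> In x l2.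

Definition ctx_trans (Delta Delta' : gctx) : Prop :=
  seteq (It Delta) (Dt Delta') /\ seteq (Dt Delta) (It Delta')
  /\ (forall D, In D (It Delta) ->
        seteq (Dtr Delta D) (Csm Delta' D) /\ seteq (Gen Delta D) (Ctr Delta' D))
  /\ (forall D, In D (Dt Delta) ->
        seteq (Csm Delta D) (Dtr Delta' D) /\ seteq (Ctr Delta D) (Gen Delta' D)).

(* Main.v *)
Require Import Defs.
From Stdlib Require Import String List Bool.
Import ListNotations.

Lemma in_concat' {A} (l : list (list A)) x :
  In x (concat l) <-> exists y, In y l /\ In x y.
Proof.
  induction l as [|a l IH]; simpl; split.
  - tauto.
  - intros [y [[] _]].
  - rewrite in_app_iff, IH. intros [H|[y [H1 H2]]]; eauto.
  - intros [y [[<-|H1] H2]]; rewrite in_app_iff, IH; eauto.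
Qed.

Lemma F2_fwd {A B} (R : A -> B -> Prop) l1 l2 :
  Forall2 R l1 l2 -> forall a, In a l1 -> exists b, In b l2 /\ R a b.
Proof.
  induction 1; simpl; [tauto|]. intros a [<-|H1]; [eauto|].
  destruct (IHForall2 a H1) as [b [? ?]]; eauto.
Qed.

Lemma F2_bwd {A B} (R : A -> B -> Prop) l1 l2 :
  Forall2 R l1 l2 -> forall b, In b l2 -> exists a, In a l1 /\ R a b.
Proof.
  induction 1; simpl; [tauto|]. intros b [<-|H1]; [eauto|].
  destruct (IHForall2 b H1) as [a [? ?]]; eauto.
Qed.

Ltac eqbs := repeat match goal with
  | H : context [String.eqb ?a ?b] |- _ => destruct (String.eqb_spec a b); subst
  | |- context [String.eqb ?a ?b] => destruct (String.eqb_spec a b); subst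
  end.

Ltac selc := repeat match goal with
  | H : context [?s ?D] |- _ => match type of s with name -> bool =>
      let E := fresh "E" in destruct (s D) eqn:E end
  | |- context [?s ?D] => match type of s with name -> bool =>
      let E := fresh "E" in destruct (s D) eqn:E end
  end.

Lemma in_Dt sel ds D : In D (Dt (collect sel ds)) <-> In (DData D) ds /\ sel D = true.
Proof.
  simpl. rewrite in_flat_map. split.
  - intros [d [Hd H]]. destruct d; try contradiction.
    destruct (sel D0) eqn:E; simpl in H; [|contradiction].
    destruct H as [<-|[]]; auto.
  - intros [H E]. exists (DData D). rewrite E; simpl; auto.
Qed.

Lemma in_It sel ds D : In D (It (collect sel ds)) <->
  (exists dts, In (DIface D dts) ds) /\ sel D = true.
Proof.
  simpl. rewrite in_flat_map. split.
  - intros [d [Hd H]]. destruct d; try contradiction.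
    destruct (sel D0) eqn:E; simpl in H; [|contradiction].
    destruct H as [<-|[]]; eauto.
  - intros [[dts H] E]. exists (DIface D dts). rewrite E; simpl; auto.
Qed.

Lemma in_Ctr sel ds D x : In x (Ctr (collect sel ds) D) <->
  sel D = true /\ exists C ps, x = (C, ps) /\ In (DCtr C ps D) ds.
Proof.
  simpl. destruct (sel D) eqn:E; [|simpl; split; [tauto|intros [H _]; discriminate]].
  rewrite in_flat_map. split.
  - intros [d [Hd H]]. destruct d; try contradiction. eqbs; [|contradiction].
    destruct H as [<-|[]]; eauto.
  - intros [_ [C [ps [-> H]]]]. exists (DCtr C ps D). simpl. rewrite String.eqb_refl; simpl; auto.
Qed.

Lemma in_Gen sel ds D x : In x (Gen (collect sel ds) D) <->
  sel D = true /\ exists C ps fs, x = (C, ps) /\ In (DGen C ps D fs) ds.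
Proof.
  simpl. destruct (sel D) eqn:E; [|simpl; split; [tauto|intros [H _]; discriminate]].
  rewrite in_flat_map. split.
  - intros [d [Hd H]]. destruct d; try contradiction. eqbs; [|contradiction].
    destruct H as [<-|[]]; eauto 6.
  - intros [_ [C [ps [fs [-> H]]]]]. exists (DGen C ps D fs). simpl. rewrite String.eqb_refl; simpl; auto.
Qed.

Lemma in_Dtr sel ds D x : In x (Dtr (collect sel ds) D) <->
  sel D = true /\ exists dts, In (DIface D dts) ds /\ In x (map dtr_sig dts).
Proof.
  simpl. destruct (sel D) eqn:E; [|simpl; split; [tauto|intros [H _]; discriminate]].
  rewrite in_flat_map. split.
  - intros [d [Hd H]]. destruct d; try contradiction. eqbs; [|contradiction]. eauto.
  - intros [_ [dts [H1 H2]]]. exists (DIface D dts). simpl. rewrite String.eqb_refl; simpl; auto.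
Qed.

Lemma in_Csm sel ds D x : In x (Csm (collect sel ds) D) <->
  sel D = true /\ exists f ps r cls, x = (f, ps, r) /\ In (DCsm f D ps r cls) ds.
Proof.
  simpl. destruct (sel D) eqn:E; [|simpl; split; [tauto|intros [H _]; discriminate]].
  rewrite in_flat_map. split.
  - intros [d [Hd H]]. destruct d; try contradiction. eqbs; [|contradiction].
    destruct H as [<-|[]]; eauto 7.
  - intros [_ [f [ps [r [cls [-> H]]]]]]. exists (DCsm f D ps r cls). simpl. rewrite String.eqb_refl; simpl; auto.
Qed.

Lemma in_csms_of ds D f ps r cls :
  In (f, ps, r, cls) (csms_of ds D) <-> In (DCsm f D ps r cls) ds.
Proof.
  unfold csms_of. rewrite in_flat_map. split.
  - intros [d [Hd H]]. destruct d; try contradiction. eqbs; [|contradiction].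
    destruct H as [H|[]]. injection H; intros; subst; auto.
  - intros H. exists (DCsm f D ps r cls). rewrite String.eqb_refl; simpl; auto.
Qed.

Lemma dtr_to_csm_fwd etr Delta ds D dts csms :
  Forall2 (dtr_to_csm etr Delta ds D) dts csms ->
  forall dt, In dt dts -> exists f ps r cls, dtr_sig dt = (f, ps, r) /\ In (DCsm f D ps r cls) csms.
Proof.
  intros HF dt Hdt. destruct (F2_fwd _ _ _ HF dt Hdt) as [c [Hc Hr]].
  unfold dtr_to_csm in Hr. destruct (dtr_sig dt) as [[f ps] r].
  destruct Hr as [g [dl [_ [_ ->]]]]. eauto 7.
Qed.

Lemma dtr_to_csm_bwd etr Delta ds D dts csms :
  Forall2 (dtr_to_csm etr Delta ds D) dts csms ->
  forall c, In c csms -> exists f ps r cls, c = DCsm f D ps r cls /\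
     exists dt, In dt dts /\ dtr_sig dt = (f, ps, r).
Proof.
  intros HF c Hc. destruct (F2_bwd _ _ _ HF c Hc) as [dt [Hdt Hr]].
  unfold dtr_to_csm in Hr. destruct (dtr_sig dt) as [[f ps] r] eqn:E.
  destruct Hr as [g [dl [_ [_ ->]]]]. eauto 8.
Qed.

Lemma csm_to_dtr_sig etr Delta D :
  forall l dts, Forall2 (csm_to_dtr etr Delta D) l dts ->
  map dtr_sig dts = map (fun c : name * params * ty * list clause =>
                           let '(f, ps, r, _) := c in (f, ps, r)) l.
Proof.
  induction 1 as [|[[[f ps] r] cls] dt l dts Hr _ IH]; simpl; auto.
  rewrite IH. f_equal. unfold csm_to_dtr in Hr.
  destruct (find is_wild cls) as [[p e]|].
  - destruct Hr as [e' [_ ->]]; reflexivity.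
  - subst; reflexivity.
Qed.

Ltac contra := solve [exfalso; unfold transformed in *; match goal with Hn : ~ _ |- _ => apply Hn end; first [left; solve [eauto] | right; solve [eauto]]].

Theorem lemmaB5 (etr : etrans) (sel : name -> bool) (P P' : program)
  (Gamma : lctx) (T : ty) (Delta Delta' : gctx) :
  Delta = collect sel (prog_defs P) ->
  trans_prog etr Delta Gamma P T P' ->
  Delta' = collect sel (prog_defs P') ->
  ctx_trans Delta Delta'.
Proof.
  intros HD [outs [F [Hds' _]]] ->.
  set (ds := prog_defs P) in *. clearbody ds.
  rewrite Hds'. clear Hds'.
  assert (Fw : forall d, In d ds -> exists out, trans_def etr Delta ds d out /\
             forall d', In d' out -> In d' (concat outs)).
  { intros d Hd. destruct (F2_fwd _ _ _ F d Hd) as [out [Ho Hr]].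
    exists out. split; auto. intros d' Hd'. apply in_concat'. eauto. }
  assert (Bw : forall d', In d' (concat outs) -> exists d out, In d ds /\
             trans_def etr Delta ds d out /\ In d' out).
  { intros d' Hd'. apply in_concat' in Hd' as [out [Ho Hd']].
    destruct (F2_bwd _ _ _ F out Ho) as [d [Hd Hr]]. eauto. }
  assert (InIt : forall D dts, In (DIface D dts) ds -> sel D = true -> In D (It Delta)).
  { intros; subst; apply in_It; eauto. }
  assert (InDt : forall D, In (DData D) ds -> sel D = true -> In D (Dt Delta)).
  { intros; subst; apply in_Dt; eauto. }
  assert (SelIt : forall D, In D (It Delta) -> sel D = true).
  { intros D H; subst; apply in_It in H; tauto. }
  assert (SelDt : forall D, In D (Dt Delta) -> sel D = true).
  { intros D H; subst; apply in_Dt in H; tauto. }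
  unfold ctx_trans, seteq, transformed in *.
  split; [|split; [|split]].
  - intro D; split; intro H.
    + pose proof (SelIt D H) as S. pose proof H as Hkeep. rewrite HD in H. apply in_It in H as [[dts Hd] _].
      try rewrite <- HD in *. destruct (Fw _ Hd) as [out [Ht Hout]].
      inversion Ht; subst out; [|contra].
      apply in_Dt. split; auto. apply Hout. left; auto.
    + apply in_Dt in H as [H S]. destruct (Bw _ H) as [d [out [Hd [Ht Hin]]]].
      inversion Ht; subst; simpl in Hin; try (destruct Hin as [Hin|[]]; discriminate).
      * destruct Hin as [Hin|Hin]; [injection Hin; intros; subst; auto|].
        destruct (dtr_to_csm_bwd _ _ _ _ _ _ H1 _ Hin) as [? [? [? [? [? _]]]]]. discriminate.
      * contradiction.
      * destruct Hin as [Hin|[]]. injection Hin; intros; subst. contra.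
  - intro D; split; intro H.
    + pose proof (SelDt D H) as S. pose proof H as Hkeep. rewrite HD in H. apply in_Dt in H as [Hd _].
      try rewrite <- HD in *. destruct (Fw _ Hd) as [out [Ht Hout]].
      inversion Ht; subst out; [|contra].
      apply in_It. split; auto. eexists. apply Hout. left; eauto.
    + apply in_It in H as [[dts' H] S]. destruct (Bw _ H) as [d [out [Hd [Ht Hin]]]].
      inversion Ht; subst; simpl in Hin; try (destruct Hin as [Hin|[]]; discriminate).
      * destruct Hin as [Hin|Hin]; [discriminate|].
        destruct (dtr_to_csm_bwd _ _ _ _ _ _ H1 _ Hin) as [? [? [? [? [? _]]]]]. discriminate.
      * destruct Hin as [Hin|[]]. injection Hin; intros; subst; auto.
      * contradiction.
      * destruct Hin as [Hin|[]]. injection Hin; intros; subst. contra.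
  - intros D HIt. pose proof (SelIt D HIt) as S. split; intro x; split; intro H.
    + rewrite HD in H. apply in_Dtr in H as [_ [dts [Hd Hx]]]. try rewrite <- HD in *.
      destruct (Fw _ Hd) as [out [Ht Hout]].
      inversion Ht; subst out; [|contra].
      apply in_map_iff in Hx as [dt [<- Hdt]].
      destruct (dtr_to_csm_fwd _ _ _ _ _ _ H3 _ Hdt) as [f [ps [r [cls [E Hc]]]]].
      rewrite E. apply in_Csm. split; auto. exists f, ps, r, cls. split; auto.
      apply Hout. right; auto.
    + apply in_Csm in H as [_ [f [ps [r [cls [-> H]]]]]].
      destruct (Bw _ H) as [d [out [Hd [Ht Hin]]]].
      inversion Ht; subst; simpl in Hin; try (destruct Hin as [Hin|[]]; discriminate).
      * destruct Hin as [Hin|Hin]; [discriminate|].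
        destruct (dtr_to_csm_bwd _ _ _ _ _ _ H1 _ Hin) as [? [? [? [? [E [dt [Hdt Hs]]]]]]].
        injection E; intros; subst.
        apply in_Dtr. split; auto. exists dts. split; auto.
        rewrite <- Hs. apply in_map; auto.
      * contradiction.
      * destruct Hin as [Hin|[]]. injection Hin; intros; subst. contra.
    + rewrite HD in H. apply in_Gen in H as [_ [C [ps [fs [-> Hd]]]]]. try rewrite <- HD in *.
      destruct (Fw _ Hd) as [out [Ht Hout]].
      inversion Ht; subst out; [|contra].
      apply in_Ctr. split; auto. exists C, ps. split; auto. apply Hout; left; auto.
    + apply in_Ctr in H as [_ [C [ps [-> H]]]].
      destruct (Bw _ H) as [d [out [Hd [Ht Hin]]]].
      inversion Ht; subst; simpl in Hin; try (destruct Hin as [Hin|[]]; discriminate).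
      * destruct Hin as [Hin|Hin]; [discriminate|].
        destruct (dtr_to_csm_bwd _ _ _ _ _ _ H1 _ Hin) as [? [? [? [? [? _]]]]]. discriminate.
      * destruct Hin as [Hin|[]]. injection Hin; intros; subst.
        try rewrite HD. apply in_Gen. split; auto. eauto 6.
      * contradiction.
      * destruct Hin as [Hin|[]]. injection Hin; intros; subst. contra.
  - intros D HDt. pose proof (SelDt D HDt) as S. split; intro x; split; intro H.
    + rewrite HD in H. apply in_Csm in H as [_ [f [ps [r [cls [-> Hd]]]]]].
      pose proof HDt as HDt'. rewrite HD in HDt'. apply in_Dt in HDt' as [HdD _].
      try rewrite <- HD in *.
      destruct (Fw _ HdD) as [out [Ht Hout]].
      inversion Ht; subst out; [|contra].
      apply in_Dtr. split; auto. exists dts. split; [apply Hout; left; auto|].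
      erewrite csm_to_dtr_sig by eassumption.
      apply in_map_iff. exists (f, ps, r, cls). split; auto. apply in_csms_of; auto.
    + apply in_Dtr in H as [_ [dts [H Hx]]].
      destruct (Bw _ H) as [d [out [Hd [Ht Hin]]]].
      inversion Ht; subst; simpl in Hin; try (destruct Hin as [Hin|[]]; discriminate).
      * destruct Hin as [Hin|Hin]; [discriminate|].
        destruct (dtr_to_csm_bwd _ _ _ _ _ _ H1 _ Hin) as [? [? [? [? [? _]]]]]. discriminate.
      * destruct Hin as [Hin|[]]. injection Hin; intros; subst.
        erewrite csm_to_dtr_sig in Hx by eassumption.
        apply in_map_iff in Hx as [[[[f ps] r] cls] [<- Hc]].
        apply in_csms_of in Hc. try rewrite HD. apply in_Csm. split; auto. eauto 7.
      * contradiction.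
      * destruct Hin as [Hin|[]]. injection Hin; intros; subst. contra.
    + rewrite HD in H. apply in_Ctr in H as [_ [C [ps [-> Hd]]]]. try rewrite <- HD in *.
      destruct (Fw _ Hd) as [out [Ht Hout]].
      inversion Ht; subst out; [|contra].
      apply in_Gen. split; auto. exists C, ps, fs. split; auto. apply Hout; left; auto.
    + apply in_Gen in H as [_ [C [ps [fs [-> H]]]]].
      destruct (Bw _ H) as [d [out [Hd [Ht Hin]]]].
      inversion Ht; subst; simpl in Hin; try (destruct Hin as [Hin|[]]; discriminate).
      * destruct Hin as [Hin|Hin]; [discriminate|].
        destruct (dtr_to_csm_bwd _ _ _ _ _ _ H1 _ Hin) as [? [? [? [? [? _]]]]]. discriminate.
      * destruct Hin as [Hin|[]]. injection Hin; intros; subst.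
        try rewrite HD. apply in_Ctr. split; auto. eauto 6.
      * contradiction.
      * destruct Hin as [Hin|[]]. injection Hin; intros; subst. contra.
Qed.
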